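(* Let $1<p<2<r<\infty$ with $r'<p$, where $q'=q/(q-1)$. Let $(k_n)$ be a sequence of positive integers such that for all $n\ge1$ \[1+2\sum_{i=1}^{n-1}i^{r/2}k_i^{r/2}\le k_n^{1-p/2}\big/n^{p/2}\quad\text{and}\quad\Big(\frac{n+1}{n}\Big)^{r/2}\Big(\frac{k_n}{k_{n+1}}\Big)^{(1/p-1/p')r/2}\le\frac12,\] and put $\alpha_n=\sqrt n\,k_n^{(1/p'-1/p)/2}$. Then for all $l,j\in\mathbb N$ with \[2\sum_{i=1}^{l-1}i^{r/2}k_i^{r/2}\le j\le k_l^{1-p/2}\big/l^{p/2},\] and all real $x_1,\dots,x_l$ with $0\le x_i\le k_i$ for $1\le i<l$ and $0\le x_l\le j-\sum_{i=1}^{l-1}x_i$, we have \[0\le\sum_{i=1}^l\alpha_i^r x_i^{r/p}\le\frac j2+2.\] *)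

(* Defs.v *)
From Stdlib Require Import Reals Lra.
Open Scope R_scope.

(* Real power x^y for x >= 0: Rpower x y for x > 0, and 0 for x <= 0.
   Used only with strictly positive exponents, where 0^y = 0 is the
   standard convention (Stdlib's Rpower 0 y would give 1). *)
Definition rpow (x y : R) : R := if Rle_dec x 0 then 0 else Rpower x y.

Fixpoint ssum (f : nat -> R) (n : nat) : R :=
  match n with
  | O => 0
  | S m => ssum f m + f (S m)
  end.

Definition conj_exp (q : R) : R := q / (q - 1).

Definition alpha (p : R) (k : nat -> nat) (n : nat) : R :=
  sqrt (INR n) * rpow (INR (k n)) ((1 / conj_exp p - 1 / p) / 2).

(* Main.v *)
Require Import Defs.
From Stdlib Require Import Reals.
From Stdlib Require Import Lra Lia.
Open Scope R_scope.

Lemma Rpower_pos (x y : R) : 0 < Rpower x y.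
Proof. unfold Rpower; apply exp_pos. Qed.

Lemma rpow_pos_eq (x y : R) : 0 < x -> rpow x y = Rpower x y.
Proof. intro H; unfold rpow; destruct (Rle_dec x 0); [lra|reflexivity]. Qed.

Lemma rpow_ge0 (x y : R) : 0 <= rpow x y.
Proof. unfold rpow; destruct (Rle_dec x 0); [lra| left; apply Rpower_pos]. Qed.

Lemma ssum_le (f g : nat -> R) (n : nat) :
  (forall i, (1 <= i)%nat -> (i <= n)%nat -> f i <= g i) -> ssum f n <= ssum g n.
Proof.
  induction n as [|n IH]; intro H; simpl; [lra|].
  assert (ssum f n <= ssum g n) by (apply IH; intros; apply H; lia).
  assert (f (S n) <= g (S n)) by (apply H; lia). lra.
Qed.

Lemma ssum_ge0 (f : nat -> R) (n : nat) :
  (forall i, (1 <= i)%nat -> (i <= n)%nat -> 0 <= f i) -> 0 <= ssum f n.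
Proof.
  induction n as [|n IH]; intro H; simpl; [lra|].
  assert (0 <= ssum f n) by (apply IH; intros; apply H; lia).
  assert (0 <= f (S n)) by (apply H; lia). lra.
Qed.

Lemma alpha_pow (p r : R) (k : nat -> nat) (i : nat) :
  (1 <= i)%nat -> (0 < k i)%nat ->
  rpow (alpha p k i) r =
  Rpower (INR i) (r/2) * Rpower (INR (k i)) ((1 / conj_exp p - 1 / p) / 2 * r).
Proof.
  intros Hi Hk.
  assert (Ii : 0 < INR i) by (apply lt_0_INR; lia).
  assert (Ik : 0 < INR (k i)) by (apply lt_0_INR; lia).
  unfold alpha. rewrite (rpow_pos_eq (INR (k i))) by exact Ik.
  assert (Hs : 0 < sqrt (INR i)) by (apply sqrt_lt_R0; exact Ii).
  pose proof (Rpower_pos (INR (k i)) ((1 / conj_exp p - 1 / p) / 2)).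
  rewrite rpow_pos_eq by (apply Rmult_lt_0_compat; assumption).
  rewrite <- Rpower_mult_distr by assumption.
  rewrite <- (Rpower_sqrt (INR i)) by exact Ii.
  rewrite !Rpower_mult. f_equal. f_equal. field.
Qed.

Theorem lemma7 (p r : R) (k : nat -> nat) :
  1 < p -> p < 2 -> 2 < r -> conj_exp r < p ->
  (forall n : nat, (1 <= n)%nat -> (0 < k n)%nat) ->
  (forall n : nat, (1 <= n)%nat ->
     1 + 2 * ssum (fun i => rpow (INR i) (r / 2) * rpow (INR (k i)) (r / 2)) (n - 1)
       <= rpow (INR (k n)) (1 - p / 2) / rpow (INR n) (p / 2)) ->
  (forall n : nat, (1 <= n)%nat ->
     rpow (INR (n + 1)%nat / INR n) (r / 2)
       * rpow (INR (k n) / INR (k (n + 1)%nat)) ((1 / p - 1 / conj_exp p) * r / 2)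
       <= 1 / 2) ->
  forall (l j : nat) (x : nat -> R),
    (1 <= l)%nat ->
    2 * ssum (fun i => rpow (INR i) (r / 2) * rpow (INR (k i)) (r / 2)) (l - 1) <= INR j ->
    INR j <= rpow (INR (k l)) (1 - p / 2) / rpow (INR l) (p / 2) ->
    (forall i : nat, (1 <= i)%nat -> (i < l)%nat -> 0 <= x i <= INR (k i)) ->
    0 <= x l <= INR j - ssum x (l - 1) ->
    0 <= ssum (fun i => rpow (alpha p k i) r * rpow (x i) (r / p)) l <= INR j / 2 + 2.
Proof.
  intros Hp1 Hp2 Hr _ Hk _ _ l j x Hl Hsum Hj Hx Hxl.
  set (e := (1 / conj_exp p - 1 / p) / 2).
  assert (Hcp : conj_exp p = p / (p - 1)) by reflexivity.
  split.
  { apply ssum_ge0; intros. apply Rmult_le_pos; apply rpow_ge0. }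
  replace l with (S (l - 1)) by lia. simpl ssum.
  replace (S (l - 1)) with l by lia.
  assert (H1 : ssum (fun i => rpow (alpha p k i) r * rpow (x i) (r / p)) (l - 1)
               <= ssum (fun i => rpow (INR i) (r / 2) * rpow (INR (k i)) (r / 2)) (l - 1)).
  { apply ssum_le. intros i Hi1 Hi2.
    assert (Hki : (0 < k i)%nat) by (apply Hk; lia).
    assert (Ii : 0 < INR i) by (apply lt_0_INR; lia).
    assert (Ik : 0 < INR (k i)) by (apply lt_0_INR; lia).
    destruct (Hx i ltac:(lia) ltac:(lia)) as [Hx0 Hxk].
    rewrite (rpow_pos_eq (INR i)), (rpow_pos_eq (INR (k i))) by assumption.
    rewrite alpha_pow by assumption.
    pose proof (Rpower_pos (INR i) (r/2)).
    pose proof (Rpower_pos (INR (k i)) (r/2)).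
    pose proof (Rpower_pos (INR (k i)) (e * r)).
    destruct (Rle_dec (x i) 0) as [Hz|Hz].
    - unfold rpow at 1. destruct (Rle_dec (x i) 0); [|lra].
      rewrite Rmult_0_r. apply Rmult_le_pos; lra.
    - rewrite rpow_pos_eq by lra.
      assert (Rpower (x i) (r/p) <= Rpower (INR (k i)) (r/p)).
      { apply Rle_Rpower_l; [apply Rlt_le; apply Rdiv_lt_0_compat; lra | lra]. }
      fold e.
      replace (Rpower (INR i) (r / 2) * Rpower (INR (k i)) (r / 2)) with
        (Rpower (INR i) (r / 2) * Rpower (INR (k i)) (e * r) * Rpower (INR (k i)) (r/p)).
      + apply Rmult_le_compat_l; [apply Rmult_le_pos; lra | assumption].
      + rewrite Rmult_assoc, <- Rpower_plus. f_equal. f_equal.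
        unfold e. rewrite Hcp. field. lra. }
  assert (Hkl : (0 < k l)%nat) by (apply Hk; lia).
  assert (Il : 0 < INR l) by (apply lt_0_INR; lia).
  assert (Ikl : 0 < INR (k l)) by (apply lt_0_INR; lia).
  assert (Hxs : 0 <= ssum x (l - 1)).
  { apply ssum_ge0. intros i Hi1 Hi2. apply (Hx i); lia. }
  assert (H2 : rpow (alpha p k l) r * rpow (x l) (r / p) <= 1).
  { rewrite alpha_pow by assumption. fold e.
    pose proof (Rpower_pos (INR l) (r/2)).
    pose proof (Rpower_pos (INR (k l)) (e * r)).
    destruct (Rle_dec (x l) 0) as [Hz|Hz].
    - unfold rpow. destruct (Rle_dec (x l) 0); [|lra]. lra.
    - rewrite rpow_pos_eq by lra.
      rewrite (rpow_pos_eq (INR (k l))), (rpow_pos_eq (INR l)) in Hj by assumption.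
      set (B := Rpower (INR (k l)) (1 - p / 2) / Rpower (INR l) (p / 2)) in Hj.
      assert (HB : B = Rpower (INR (k l)) (1 - p / 2) * Rpower (INR l) (- (p / 2))).
      { unfold B. rewrite Rpower_Ropp. reflexivity. }
      assert (HxB : Rpower (x l) (r/p) <= Rpower B (r/p)).
      { apply Rle_Rpower_l; [apply Rlt_le; apply Rdiv_lt_0_compat; lra | lra]. }
      rewrite HB, <- Rpower_mult_distr, !Rpower_mult in HxB by apply Rpower_pos.
      apply Rle_trans with
        (Rpower (INR l) (r / 2) * Rpower (INR (k l)) (e * r) *
         (Rpower (INR (k l)) ((1 - p / 2) * (r / p)) * Rpower (INR l) (- (p / 2) * (r / p)))).
      + apply Rmult_le_compat_l; [apply Rmult_le_pos; lra | assumption].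
      + right.
        replace (Rpower (INR l) (r / 2) * Rpower (INR (k l)) (e * r) *
         (Rpower (INR (k l)) ((1 - p / 2) * (r / p)) * Rpower (INR l) (- (p / 2) * (r / p))))
        with (Rpower (INR l) (r / 2 + - (p / 2) * (r / p)) *
              Rpower (INR (k l)) (e * r + (1 - p / 2) * (r / p)))
        by (rewrite !Rpower_plus; ring).
        replace (r / 2 + - (p / 2) * (r / p)) with 0 by (field; lra).
        replace (e * r + (1 - p / 2) * (r / p)) with 0 by (unfold e; rewrite Hcp; field; lra).
        rewrite !Rpower_O by assumption. ring. }
  lra.
Qed.
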